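(* Let $M\ge 0$, $\mathcal{M}=\{0,\dots,M\}$, $T\ge 1$, $c_u,c_l>0$, $0\le\beta\le 1$, and let $P$ be a stochastic matrix on $\mathcal{M}$ with rows $P_{i,\cdot}$. For a probability vector $b$ on $\mathcal{M}$ and $r\in\mathcal{M}$ let $$\bar C(b;r)=c_l\sum_{i=r}^{M} b(i)(i-r)+c_u\sum_{i=0}^{r-1} b(i)(r-i),$$ and when $\sum_{j\ge r}b(j)>0$ let $T_r[b]$ be the probability vector with $T_r[b](i)=0$ for $i<r$ and $T_r[b](i)=b(i)/\sum_{j=r}^M b(j)$ for $i\ge r$. Define $$V_T(b)=\min_{r}\bar C(b;r),\qquad V_t(b)=\min_{r\in\mathcal{M}}\Big\{\bar C(b;r)+\beta\Big[\Big(\sum_{i=r}^M b(i)\Big)V_{t+1}(T_r[b]P)+\sum_{i=0}^{r-1} b(i)V_{t+1}(P_{i,\cdot})\Big]\Big\},\ t<T,$$ (the first bracketed term being $0$ when $\sum_{i\ge r}b(i)=0$), and the full-observation value functions $$V^{FO}_T(b)=\bar C(b;\pi^{m}(b)),\qquad V^{FO}_t(b)=\bar C(b;\pi^{m}(b))+\beta\sum_{i=0}^M b(i)\,V^{FO}_{t+1}(P_{i,\cdot}),\ t<T,$$ where $\pi^m(b)=\min\{r\in\mathcal{M}:\sum_{i=0}^r b(i)\ge \frac{c_l}{c_l+c_u}\}$. Then for every $t\in\{1,\dots,T\}$ and every probability vector $b$, $V_t(b)\ge V^{FO}_t(b)$.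
   Context: $V_t$ is the optimal cost-to-go of the partially observed tracking problem (a Markov chain $B_t$ with transition matrix $P$; action $r>B_t$ costs $c_u(r-B_t)$ and reveals $B_t$, action $r\le B_t$ costs $c_l(B_t-r)$ and reveals only $B_t\ge r$), written in terms of the belief $b$; $V^{FO}$ is the cost-to-go of a genie that observes the state after every step. *)

(* Defs.v *)
From mathcomp Require Import all_boot all_order all_algebra.
Set Implicit Arguments. Unset Strict Implicit. Unset Printing Implicit Defensive.
Import Order.TTheory GRing.Theory Num.Theory.
Local Open Scope ring_scope.

Section Tracking.
Variables (R : realFieldType) (M : nat).
Notation S := 'I_M.+1.

Definition prob_vec (b : {ffun S -> R}) : Prop :=
  (forall i, 0 <= b i) /\ \sum_i b i = 1.

Definition stochastic (P : 'M[R]_M.+1) : Prop :=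
  (forall i j, 0 <= P i j) /\ (forall i, \sum_j P i j = 1).

Definition rowP (P : 'M[R]_M.+1) (i : S) : {ffun S -> R} := [ffun j => P i j].

Definition minS (f : S -> R) : R := \big[Num.min/f ord0]_(r : S) f r.

Definition Cbar (cu cl : R) (b : {ffun S -> R}) (r : S) : R :=
  cl * (\sum_(i : S | (r <= i)%N) b i * ((i : nat)%:R - (r : nat)%:R))
  + cu * (\sum_(i : S | (i < r)%N) b i * ((r : nat)%:R - (i : nat)%:R)).

Definition tail_mass (b : {ffun S -> R}) (r : S) : R :=
  \sum_(i : S | (r <= i)%N) b i.

Definition Tr (b : {ffun S -> R}) (r : S) : {ffun S -> R} :=
  [ffun i : S => if (r <= i)%N then b i / tail_mass b r else 0].

Definition propag (P : 'M[R]_M.+1) (b : {ffun S -> R}) : {ffun S -> R} :=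
  [ffun j => \sum_i b i * P i j].

(* Partially observed value with k steps to go: V_t = Vpo (T - t). *)
Fixpoint Vpo (cu cl beta : R) (P : 'M[R]_M.+1) (k : nat) (b : {ffun S -> R}) : R :=
  match k with
  | 0 => minS (Cbar cu cl b)
  | k'.+1 => minS (fun r =>
       Cbar cu cl b r
       + beta * ((if tail_mass b r > 0
                  then tail_mass b r * Vpo cu cl beta P k' (propag P (Tr b r))
                  else 0)
                 + \sum_(i : S | (i < r)%N) b i * Vpo cu cl beta P k' (rowP P i)))
  end.

Definition pim (cu cl : R) (b : {ffun S -> R}) : S :=
  odflt ord_max
    [pick r : S | (cl / (cl + cu) <= \sum_(i : S | (i <= r)%N) b i)
                  && [forall r' : S, (r' < r)%N ==>
                        ~~ (cl / (cl + cu) <= \sum_(i : S | (i <= r')%N) b i)]].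

(* Full-observation value with k steps to go: V^FO_t = Vfo (T - t). *)
Fixpoint Vfo (cu cl beta : R) (P : 'M[R]_M.+1) (k : nat) (b : {ffun S -> R}) : R :=
  match k with
  | 0 => Cbar cu cl b (pim cu cl b)
  | k'.+1 => Cbar cu cl b (pim cu cl b)
       + beta * \sum_i b i * Vfo cu cl beta P k' (rowP P i)
  end.

End Tracking.

(* Main.v *)
Require Import Defs.
From mathcomp Require Import all_boot all_order all_algebra.
From mathcomp Require Import ring lra.
Set Implicit Arguments. Unset Strict Implicit. Unset Printing Implicit Defensive.
Import Order.TTheory GRing.Theory Num.Theory.
Local Open Scope ring_scope.

Section Aux.
Variables (R : realFieldType) (M : nat) (cu cl : R).
Hypotheses (hcu : 0 < cu) (hcl : 0 < cl).
Notation S := 'I_M.+1.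

Definition hh (j r : nat) : R :=
  if (r <= j)%N then cl * (j%:R - r%:R) else cu * (r%:R - j%:R).
Definition GG (x : {ffun S -> R}) (n : nat) : R := \sum_(j : S) x j * hh j n.
Definition FF (x : {ffun S -> R}) (n : nat) : R := \sum_(j : S | (j <= n)%N) x j.

Lemma CbarE x (r : S) : Cbar cu cl x r = GG x r.
Proof.
rewrite /Cbar /GG [RHS](bigID (fun j : S => (r <= j)%N)) /=.
rewrite !big_distrr /=; congr (_ + _).
  by apply: eq_big => // j Hj; rewrite /hh Hj mulrCA.
apply: eq_big => [j|j Hj]; first by rewrite ltnNge.
by rewrite /hh leqNgt Hj mulrCA.
Qed.

Lemma FF_mono (x : {ffun S -> R}) m n : (forall i, 0 <= x i) -> (n <= m)%N -> FF x n <= FF x m.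
Proof.
move=> x0 nm; rewrite /FF [X in X <= _]big_mkcond [X in _ <= X]big_mkcond /=.
apply: ler_sum => j _; case: ifP => Hj; first by rewrite (leq_trans Hj nm).
by case: ifP.
Qed.

Lemma GG_step (x : {ffun S -> R}) n : \sum_j x j = 1 -> GG x n.+1 - GG x n = (cu + cl) * FF x n - cl.
Proof.
move=> x1; rewrite /GG -sumrB.
have -> : \sum_(j : S) (x j * hh j n.+1 - x j * hh j n)
   = \sum_(j : S) x j * (if (j <= n)%N then cu else - cl).
  apply: eq_bigr => j _; rewrite -mulrBr; congr (_ * _).
  rewrite /hh -natr1; case: (ltngtP j n) => Hj.
  - ring.
  - ring.
  - by rewrite Hj; ring.
move: x1; rewrite (bigID (fun j : S => (j <= n)%N)) /= => x1.
rewrite (bigID (fun j : S => (j <= n)%N)) /=.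
rewrite [X in X + _](eq_bigr (fun j => x j * cu)); last by move=> j ->.
rewrite [X in _ + X](eq_bigr (fun j => x j * - cl)); last by move=> j /negbTE ->.
rewrite -!mulr_suml /FF.
have -> : \sum_(i < M.+1 | ~~ (i <= n)%N) x i = 1 - \sum_(i < M.+1 | (i <= n)%N) x i.
  by rewrite -x1; ring.
ring.
Qed.

Definition th := cl / (cl + cu).

Lemma pim_spec (x : {ffun S -> R}) : prob_vec x ->
  th <= FF x (pim cu cl x) /\ forall r : S, (r < pim cu cl x)%N -> FF x r < th.
Proof.
move=> [x0 x1].
rewrite /pim; case: pickP => [r /andP[H1 /forallP H2] | Hnone] /=.
  split => // r' Hr'; move: (H2 r') => /implyP /(_ Hr').
  by rewrite /FF /th ltNge.
exfalso.
have exP : exists n, (n <= M)%N && (th <= FF x n).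
  exists M; rewrite leqnn /=.
  have -> : FF x M = 1 by rewrite /FF -x1; apply: eq_bigl => i; rewrite leq_ord.
  by rewrite /th ler_pdivrMr ?mul1r ?lerDl ?ltW // addr_gt0.
case: (ex_minnP exP) => m /andP[mM Hm] Hmin.
have mlt : (m < M.+1)%N by [].
move: (Hnone (Ordinal mlt)) => /=; rewrite [X in X && _]Hm /=.
move/negbT/negP; apply; apply/forallP => r'; apply/implyP => Hr'; apply/negP => H.
have := Hmin r'; rewrite leq_ord H /= => /(_ isT).
by rewrite leqNgt Hr'.
Qed.

Lemma pim_opt (x : {ffun S -> R}) (r : S) : prob_vec x -> Cbar cu cl x (pim cu cl x) <= Cbar cu cl x r.
Proof.
move=> px; have [x0 x1] := px; have [Hp Hlt] := pim_spec px.
rewrite !CbarE; set p := pim cu cl x.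
have up : forall d, GG x p <= GG x (p + d).
  elim=> [|d IH]; first by rewrite addn0.
  apply: (le_trans IH); rewrite addnS -subr_ge0 GG_step //.
  have := FF_mono x0 (leq_addr d p); move: Hp.
  rewrite /th ler_pdivrMr ?addr_gt0 // => H1 H2.
  have h3 : FF x p * (cl + cu) <= FF x (p+d) * (cl+cu).
    by rewrite ler_wpM2r // ltW // addr_gt0.
  rewrite -/p in H1; lra.
have down : forall d, (d <= p)%N -> GG x p <= GG x (p - d).
  elim=> [|d IH Hd]; first by rewrite subn0.
  apply: (le_trans (IH (ltnW Hd))).
  have Hn : (p - d.+1 < M.+1)%N.
    by apply: leq_ltn_trans (leq_subr _ _) (ltn_ord p).
  have := Hlt (Ordinal Hn) => /=.
  have -> : (p - d.+1 < p)%N by rewrite -subn_gt0 subKn // ?ltnW.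
  move=> /(_ isT); rewrite /th ltr_pdivlMr ?addr_gt0 // => H.
  have := GG_step (p - d.+1) x1; rewrite subnSK //.
  move=> E; lra.
case: (leqP p r) => Hr.
  by rewrite -(subnKC Hr); apply: up.
by rewrite -(subKn (ltnW Hr)); apply: down; rewrite leq_subr.
Qed.

End Aux.

Section Main.
Variables (R : realFieldType) (M : nat) (cu cl beta : R) (P : 'M[R]_M.+1).
Hypotheses (hcu : 0 < cu) (hcl : 0 < cl) (hb : 0 <= beta) (hP : stochastic P).
Notation S := 'I_M.+1.

Lemma minS_ge (f : S -> R) X : (forall r, X <= f r) -> X <= minS f.
Proof.
move=> H; rewrite /minS; elim/big_ind: _ => //.
by move=> a b Ha Hb; rewrite le_min Ha Hb.
Qed.

Lemma rowPE (i j : S) : Defs.rowP P i j = P i j.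
Proof. by rewrite /Defs.rowP ffunE. Qed.

Lemma prob_row (i : S) : prob_vec (Defs.rowP P i).
Proof.
case: hP => P0 P1; split => [j|]; first by rewrite ffunE.
by rewrite -(P1 i); apply: eq_bigr => j _; rewrite ffunE.
Qed.

Lemma sum_propag (h : S -> R) (w : {ffun S -> R}) :
  \sum_j propag P w j * h j = \sum_i w i * \sum_j P i j * h j.
Proof.
rewrite /propag.
under eq_bigr do rewrite ffunE mulr_suml.
rewrite exchange_big /=; apply: eq_bigr => i _; rewrite big_distrr /=.
by apply: eq_bigr => j _; rewrite mulrA.
Qed.

Lemma prob_propag (w : {ffun S -> R}) : prob_vec w -> prob_vec (propag P w).
Proof.
case: hP => P0 P1 [w0 w1]; split => [j|].
  by rewrite ffunE; apply: sumr_ge0 => i _; rewrite mulr_ge0.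
rewrite /propag; under eq_bigr do rewrite ffunE.
rewrite exchange_big /= -w1; apply: eq_bigr => i _.
by rewrite -big_distrr /= P1 mulr1.
Qed.

Lemma prob_Tr (x : {ffun S -> R}) (r : S) :
  prob_vec x -> 0 < tail_mass x r -> prob_vec (Tr x r).
Proof.
move=> [x0 x1] tp; split => [i|].
  by rewrite ffunE; case: ifP => // _; rewrite divr_ge0 // ltW.
rewrite /Tr.
under eq_bigr do rewrite ffunE.
rewrite -big_mkcond /= -mulr_suml -/(tail_mass x r) divff //.
by rewrite gt_eqF.
Qed.

Definition DD k (j : S) : R :=
  match k with 0 => 0 | k'.+1 => Vfo cu cl beta P k' (Defs.rowP P j) end.

Lemma VfoE k (x : {ffun S -> R}) : Vfo cu cl beta P k x
  = Cbar cu cl x (pim cu cl x) + beta * \sum_j x j * DD k j.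
Proof.
case: k => [|k] //=.
by rewrite big1 ?mulr0 ?addr0 // => j _; rewrite mulr0.
Qed.

Lemma concave k (w : {ffun S -> R}) : prob_vec w ->
  \sum_i w i * Vfo cu cl beta P k (Defs.rowP P i) <= Vfo cu cl beta P k (propag P w).
Proof.
move=> pw; have [w0 w1] := pw.
rewrite VfoE CbarE sum_propag /GG sum_propag big_distrr -big_split /=.
apply: ler_sum => i _; rewrite VfoE mulrCA -mulrDr.
apply: ler_wpM2l => //.
set p := pim cu cl (propag P w).
apply: lerD; last first.
  by rewrite (eq_bigr (fun j => P i j * DD k j)) // => j _; rewrite rowPE.
have := pim_opt hcu hcl p (prob_row i).
rewrite !CbarE /GG.
by under [X in _ <= X -> _]eq_bigr do rewrite rowPE.
Qed.

Lemma main k (x : {ffun S -> R}) : prob_vec x -> Vfo cu cl beta P k x <= Vpo cu cl beta P k x.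
Proof.
elim: k x => [|k IH] x px /=.
  by apply: minS_ge => r; apply: pim_opt.
have [x0 x1] := px.
apply: minS_ge => r.
apply: lerD; first exact: pim_opt.
apply: ler_wpM2l => //.
rewrite (bigID (fun i : S => (r <= i)%N)) /=.
apply: lerD.
  case: ifP => tp.
    apply: le_trans (ler_wpM2l (ltW tp) (IH _ (prob_propag (prob_Tr px tp)))).
    apply: le_trans (ler_wpM2l (ltW tp) (concave k (prob_Tr px tp))).
    rewrite big_distrr /= [X in X <= _]big_mkcond /=; apply: ler_sum => i _.
    rewrite /Tr ffunE; case: ifP => _; last by rewrite mul0r mulr0.
    by rewrite mulrA mulrCA divff ?mulr1 // gt_eqF.
  have t0 : tail_mass x r = 0.
    apply/eqP; rewrite eq_le leNgt tp /=.
    by apply: sumr_ge0.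
  rewrite big1 // => i Hi.
  by rewrite (psumr_eq0P (fun i _ => x0 i) t0) // mul0r.
rewrite [X in _ <= X](eq_bigl (fun i : S => ~~ (r <= i)%N)); last by move=> i; rewrite ltnNge.
apply: ler_sum => i _; apply: ler_wpM2l => //; exact: IH (prob_row i).
Qed.

End Main.

Theorem lemma2 (R : realFieldType) (M T : nat) (cu cl beta : R)
  (P : 'M[R]_M.+1) (b : {ffun 'I_M.+1 -> R}) (t : nat) :
  (1 <= T)%N -> 0 < cu -> 0 < cl -> 0 <= beta -> beta <= 1 ->
  stochastic P -> (1 <= t <= T)%N -> prob_vec b ->
  Vfo cu cl beta P (T - t) b <= Vpo cu cl beta P (T - t) b.
Proof.
move=> _ hcu hcl hb _ hP _ pb; exact: main.
Qed.
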